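(* Let $\mathcal{H}$ be a real Hilbert space, let $A\colon \mathcal{H}\rightrightarrows\mathcal{H}$ be maximally monotone, let $B\colon \mathcal{H}\to\mathcal{H}$ be monotone and $L$-Lipschitz, and suppose that $(A+B)^{-1}(0)\neq\varnothing$. Choose $\lambda\in \left(0,\frac{1}{2L}\right)$. Given $x_0,x_{-1}\in\mathcal{H}$, define the sequence $(x_k)$ by $$x_{k+1} = J_{\lambda A}\bigl(x_k - 2\lambda B(x_k) +\lambda B(x_{k-1})\bigr) \quad\forall k\in\mathbb{N}.$$ Then $(x_k)$ converges weakly to a point contained in $(A+B)^{-1}(0)$.
   Context: $J_{\lambda A}:=(I+\lambda A)^{-1}$ denotes the resolvent. *)

(* Defs.v *)
From HB Require Import structures.
From mathcomp Require Import all_boot all_order all_algebra.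
From mathcomp Require Import all_classical all_reals all_analysis.
Set Implicit Arguments. Unset Strict Implicit. Unset Printing Implicit Defensive.
Import Order.TTheory GRing.Theory Num.Theory.
Import numFieldNormedType.Exports.
Local Open Scope classical_set_scope.
Local Open Scope ring_scope.

Definition is_inner_product (R : realType) (H : normedModType R)
  (ip : H -> H -> R) : Prop :=
  [/\ forall x y, ip x y = ip y x,
      forall (a : R) x y z, ip (a *: x + y) z = a * ip x z + ip y z
    & forall x, ip x x = `|x| ^+ 2].

(* Set-valued operators H ⇉ H are maps H -> set H. *)
Definition monotone_op (R : realType) (H : normedModType R)
  (ip : H -> H -> R) (A : H -> set H) : Prop :=
  forall x y u v, A x u -> A y v -> 0 <= ip (x - y) (u - v).

Definition maximally_monotone (R : realType) (H : normedModType R)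
  (ip : H -> H -> R) (A : H -> set H) : Prop :=
  monotone_op ip A /\
  forall A' : H -> set H, monotone_op ip A' ->
    (forall x, A x `<=` A' x) -> forall x, A' x = A x.

Definition monotone_fun (R : realType) (H : normedModType R)
  (ip : H -> H -> R) (B : H -> H) : Prop :=
  forall x y, 0 <= ip (x - y) (B x - B y).

Definition lipschitz_with (R : realType) (H : normedModType R)
  (L : R) (B : H -> H) : Prop :=
  forall x y, `|B x - B y| <= L * `|x - y|.

(* Resolvent J_{lam A} = (I + lam A)^{-1}, as a set-valued map:
   p \in J_{lam A}(w)  <->  w \in p + lam A p. *)
Definition resolvent (R : realType) (H : normedModType R)
  (lam : R) (A : H -> set H) (w : H) : set H :=
  [set p | exists2 a, A p a & w = p + lam *: a].

Definition zer_sum (R : realType) (H : normedModType R)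
  (A : H -> set H) (B : H -> H) : set H :=
  [set z | exists2 a, A z a & a + B z = 0].

Definition weak_cvg_to (R : realType) (H : normedModType R)
  (ip : H -> H -> R) (x : nat -> H) (z : H) : Prop :=
  forall y, (fun k => ip (x k) y) @ \oo --> ip z y.

(* Main.v *)
Require Import Defs.
From HB Require Import structures.
From mathcomp Require Import all_boot all_order all_algebra.
From mathcomp Require Import all_classical all_reals all_analysis.
From mathcomp Require Import ring lra.
Import Order.TTheory GRing.Theory Num.Theory.
Import numFieldNormedType.Exports.
Local Open Scope classical_set_scope.
Local Open Scope ring_scope.
Set Implicit Arguments. Unset Strict Implicit. Unset Printing Implicit Defensive.
Section IP.
Variables (R : realType) (H : normedModType R) (ip : H -> H -> R).
Hypothesis hip : is_inner_product ip.

Lemma ipC x y : ip x y = ip y x.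
Proof. by case: hip. Qed.

Lemma ipL a x y z : ip (a *: x + y) z = a * ip x z + ip y z.
Proof. by case: hip. Qed.

Lemma ipxx x : ip x x = `|x| ^+ 2.
Proof. by case: hip. Qed.

Lemma ip0l z : ip 0 z = 0.
Proof. have := ipL 1 0 0 z; rewrite scale1r addr0 mul1r => h; lra. Qed.

Lemma ipDl x y z : ip (x + y) z = ip x z + ip y z.
Proof. by rewrite -[x in LHS]scale1r ipL mul1r. Qed.

Lemma ipZl a x z : ip (a *: x) z = a * ip x z.
Proof. by rewrite -[_ *: _]addr0 ipL ip0l addr0. Qed.

Lemma ipNl x z : ip (- x) z = - ip x z.
Proof. by rewrite -scaleN1r ipZl mulN1r. Qed.

Lemma ipBl x y z : ip (x - y) z = ip x z - ip y z.
Proof. by rewrite ipDl ipNl. Qed.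

Lemma ip0r z : ip z 0 = 0.
Proof. by rewrite ipC ip0l. Qed.

Lemma ipDr x y z : ip z (x + y) = ip z x + ip z y.
Proof. by rewrite ipC ipDl !(ipC z). Qed.

Lemma ipZr a x z : ip z (a *: x) = a * ip z x.
Proof. by rewrite ipC ipZl ipC. Qed.

Lemma ipNr x z : ip z (- x) = - ip z x.
Proof. by rewrite ipC ipNl ipC. Qed.

Lemma ipBr x y z : ip z (x - y) = ip z x - ip z y.
Proof. by rewrite ipDr ipNr. Qed.

Lemma normD2 x y : `|x + y| ^+ 2 = `|x| ^+ 2 + 2 * ip x y + `|y| ^+ 2.
Proof. rewrite -!ipxx ipDl !ipDr (ipC y x); ring. Qed.

Lemma normB2 x y : `|x - y| ^+ 2 = `|x| ^+ 2 - 2 * ip x y + `|y| ^+ 2.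
Proof. rewrite -!ipxx ipBl !ipBr (ipC y x); ring. Qed.

Lemma ip_le x y : ip x y <= `|x| * `|y|.
Proof.
have h := normB2 (`|y| *: x) (`|x| *: y).
rewrite !normrZ !ger0_norm // ipZl ipZr in h.
have h0 : 0 <= `| `|y| *: x - `|x| *: y| ^+ 2 by rewrite exprn_ge0.
have [/eqP x0|xn0] := eqVneq `|x| 0.
  by rewrite normr_eq0 in x0; rewrite (eqP x0) ip0l normr0 mul0r.
have [/eqP y0|yn0] := eqVneq `|y| 0.
  by rewrite normr_eq0 in y0; rewrite (eqP y0) ip0r normr0 mulr0.
have p : 0 < `|x| * `|y| by rewrite mulr_gt0 // lt_neqAle eq_sym ?xn0 ?yn0 /=.
rewrite h in h0.
have : `|x| * `|y| * ip x y <= `|x| * `|y| * (`|x| * `|y|) by nra.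
by rewrite ler_pM2l.
Qed.

Lemma CS x y : `|ip x y| <= `|x| * `|y|.
Proof.
rewrite ler_norml ip_le andbT.
by have := ip_le (- x) y; rewrite ipNl normrN; lra.
Qed.

Lemma ip_ge x y : - (`|x| * `|y|) <= ip x y.
Proof. by have := CS x y; rewrite ler_norml => /andP[]. Qed.

End IP.
Section Step.
Variables (R : realType) (H : normedModType R) (ip : H -> H -> R).
Variables (A : H -> set H) (B : H -> H) (L lam : R).
Hypothesis hip : is_inner_product ip.
Hypothesis monoA : monotone_op ip A.
Hypothesis monoB : monotone_fun ip B.
Hypothesis lipB : lipschitz_with L B.
Hypothesis lam0 : 0 < lam.
Hypothesis L0 : 0 < L.

Definition phi (Z Y Yp : H) : R :=
  `|Y - Z| ^+ 2 - 2 * lam * ip (Y - Z) (B Y - B Yp) + lam * L * `|Y - Yp| ^+ 2.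

Lemma frb_step X1 X0 Xp Z a az :
  A X1 a -> A Z az -> az + B Z = 0 ->
  X0 - (2 * lam) *: B X0 + lam *: B Xp = X1 + lam *: a ->
  phi Z X1 X0 + (1 - 2 * lam * L) * `|X1 - X0| ^+ 2 <= phi Z X0 Xp.
Proof.
move=> hA hZ haz heq.
have ha : lam *: a = X0 - (2 * lam) *: B X0 + lam *: B Xp - X1.
  by rewrite heq addrAC subrr add0r.
have hz : az = - B Z by apply/eqP; rewrite -addr_eq0 haz.
have e1 : 0 <= ip (X1 - Z) (lam *: a) - ip (X1 - Z) (lam *: az).
  rewrite !(ipZr hip) -mulrBr -(ipBr hip); apply: mulr_ge0; first exact: ltW.
  exact: monoA.
have e2 : 0 <= ip (X1 - Z) (B X1 - B Z) := monoB _ _.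
have e3 : ip (X0 - X1) (B X0 - B Xp) <= `|X0 - X1| * (L * `|X0 - Xp|).
  apply: le_trans (ip_le hip _ _) _; apply: ler_wpM2l => //.
have n1 : `|X0 - Z| ^+ 2 = `|X1 - Z| ^+ 2 + 2 * ip (X1 - Z) (X0 - X1) + `|X0 - X1| ^+ 2.
  by rewrite -(normD2 hip) (addrC (X1 - Z)) addrA subrK.
have i1 : ip (X0 - Z) (B X0 - B Xp) = ip (X1 - Z) (B X0 - B Xp) + ip (X0 - X1) (B X0 - B Xp).
  by rewrite -(ipDl hip) (addrC (X1 - Z)) addrA subrK.
have n2 : `|X1 - X0| = `|X0 - X1| by rewrite distrC.
have sq : 0 <= lam * L * (`|X0 - X1| - `|X0 - Xp|) ^+ 2.
  by apply: mulr_ge0; [apply: mulr_ge0; exact: ltW|exact: sqr_ge0].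
have e2' := mulr_ge0 (ltW lam0) e2.
have e3' : lam * ip (X0 - X1) (B X0 - B Xp) <= lam * (`|X0 - X1| * (L * `|X0 - Xp|)).
  by rewrite ler_pM2l.
have sq' : 0 <= lam * L * `|X0 - X1| ^+ 2 + lam * L * `|X0 - Xp| ^+ 2 - 2 * lam * (`|X0 - X1| * (L * `|X0 - Xp|)).
  by move: sq; congr (_ <= _); ring.
rewrite /phi n1 i1 n2.
rewrite ha hz in e1.
rewrite !(ipBr hip, ipDr hip, ipZr hip, ipNr hip) in e1 e2' e3' *.
lra.
Qed.
End Step.
Lemma cvg0_le (R : realType) (T : Type) (F : set_system T) (FF : Filter F)
  (f g : T -> R) : (forall t, `|f t| <= g t) -> g @ F --> 0 -> f @ F --> 0.
Proof.
move=> hfg hg; apply/cvgr0Pnorm_le => e e0.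
near=> t; apply: le_trans (hfg t) (le_trans (ler_norm _) _).
near: t. have := @cvgr0_norm_le _ _ _ F FF g hg e e0. exact.
Unshelve. all: end_near.
Qed.

Lemma cvg_ext_to (T : Type) (F : set_system T) (FF : Filter F)
  (V : topologicalType) (f g : T -> V) (l : V) :
  f @ F --> l -> (forall t, f t = g t) -> g @ F --> l.
Proof. by move=> h e; rewrite (_ : g = f) //; apply/funext => t; rewrite e. Qed.

Lemma cvg0_sq (R : realType) (d : nat -> R) : (forall k, 0 <= d k) ->
  (fun k => d k ^+ 2) @ \oo --> 0 -> d @ \oo --> 0.
Proof.
move=> d0 h.
have := cvg_comp _ _ h (@sqrt_continuous R 0).
rewrite sqrtr0; apply: cvg_trans; apply: near_eq_cvg; near=> k.
by rewrite /= sqrtr_sqr ger0_norm.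
Unshelve. all: end_near.
Qed.

Lemma id1 (R : realType) (H : normedModType R) (X0 X1 B0 Bp B1 : H) (lam : R) :
  X0 - (2*lam) *: B0 + lam *: Bp - X1 + lam *: B1
  = (X0 - X1) + (lam *: (B1 - B0) - lam *: (B0 - Bp)).
Proof.
rewrite mulr_natl -scalerMnl mulr2n !scalerBr.
set b0 := lam *: B0; set bp := lam *: Bp; set b1 := lam *: B1.
rewrite opprB opprD !addrA.
by rewrite (ACl (1*5*6*2*4*3)).
Qed.

Section Seq.
Variables (R : realType) (H : normedModType R) (ip : H -> H -> R).
Variables (A : H -> set H) (B : H -> H) (L lam : R).
Hypothesis hip : is_inner_product ip.
Hypothesis monoA : monotone_op ip A.
Hypothesis monoB : monotone_fun ip B.
Hypothesis lipB : lipschitz_with L B.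
Hypothesis lam0 : 0 < lam.
Hypothesis L0 : 0 < L.
Hypothesis lamL : 2 * lam * L < 1.
Variables (x : nat -> H) (xm1 : H) (a : nat -> H).
Definition xp k := if k is k'.+1 then x k' else xm1.
Hypothesis hA : forall k, A (x k.+1) (a k).
Hypothesis heq : forall k,
  x k - (2 * lam) *: B (x k) + lam *: B (xp k) = x k.+1 + lam *: a k.

Lemma phi_lb Z Y Yp : (1 - lam * L) * `|Y - Z| ^+ 2 <= phi ip B L lam Z Y Yp.
Proof.
rewrite /phi.
have e : ip (Y - Z) (B Y - B Yp) <= `|Y - Z| * (L * `|Y - Yp|).
  apply: le_trans (ip_le hip _ _) _; apply: ler_wpM2l => //.
have e' : lam * ip (Y - Z) (B Y - B Yp) <= lam * (`|Y - Z| * (L * `|Y - Yp|)).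
  by rewrite ler_pM2l.
have sq : 0 <= lam * L * (`|Y - Z| - `|Y - Yp|) ^+ 2.
  by apply: mulr_ge0; [apply: mulr_ge0; exact: ltW|exact: sqr_ge0].
have sq' : 0 <= lam * L * `|Y - Z| ^+ 2 + lam * L * `|Y - Yp| ^+ 2 - 2 * lam * (`|Y - Z| * (L * `|Y - Yp|)).
  by move: sq; congr (_ <= _); ring.
lra.
Qed.

Variables (z az : H).
Hypothesis hz : A z az.
Hypothesis hz0 : az + B z = 0.

Let ph k := phi ip B L lam z (x k) (xp k).
Let c := 1 - 2 * lam * L.

Lemma ph_step k : ph k.+1 + c * `|x k.+1 - x k| ^+ 2 <= ph k.
Proof. exact: (frb_step hip monoA monoB lipB lam0 L0 (hA k) hz hz0 (heq k)). Qed.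

Lemma ph_ge0 k : 0 <= ph k.
Proof.
apply: le_trans (phi_lb z _ _); apply: mulr_ge0; last exact: sqr_ge0.
rewrite subr_ge0; apply: ltW; apply: le_lt_trans lamL.
have h : 0 <= lam * L by apply: mulr_ge0; apply: ltW.
lra.
Qed.

Lemma ph_noninc : nonincreasing_seq ph.
Proof.
apply/nonincreasing_seqP => k; have := ph_step k.
have : 0 <= c * `|x k.+1 - x k| ^+ 2.
  by apply: mulr_ge0; [rewrite subr_ge0 ltW|exact: sqr_ge0].
lra.
Qed.

Lemma ph_cvg : exists l : R, ph @ \oo --> l.
Proof.
exists (inf (ph @` setT)); apply: nonincreasing_cvgn; first exact: ph_noninc.
by exists 0 => _ [k _ <-]; exact: ph_ge0.
Qed.

Lemma seq_bounded : exists M, forall k, `|x k - z| <= M.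
Proof.
have c1 : 0 < 1 - lam * L.
  have h : 0 <= lam * L by apply: mulr_ge0; apply: ltW.
  rewrite subr_gt0; apply: le_lt_trans lamL; lra.
exists (1 + ph 0%N / (1 - lam * L)) => k.
have h1 : ph k <= ph 0%N by apply: ph_noninc.
have h2 := phi_lb z (x k) (xp k).
have h3 : `|x k - z| ^+ 2 <= ph 0%N / (1 - lam * L).
  rewrite ler_pdivlMr // mulrC; apply: le_trans h1; exact: h2.
have h4 : `|x k - z| <= 1 + `|x k - z| ^+ 2.
  have := sqr_ge0 (`|x k - z| - 1). nra.
lra.
Qed.

Lemma dcvg : (fun k => `|x k.+1 - x k|) @ \oo --> 0.
Proof.
apply: cvg0_sq => [k|]; first exact: normr_ge0.
have [l hl] := ph_cvg.
have c0 : 0 < c by rewrite subr_gt0.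
have hd : (fun k => (ph k - ph k.+1) / c) @ \oo --> 0.
  have hl' : (fun k => ph k.+1) @ \oo --> l by rewrite cvg_shiftS.
  have h : (fun k => (ph k - ph k.+1) * c^-1) @ \oo --> (l - l) * c^-1.
    by apply: cvgMr_tmp; apply: cvgB.
  by rewrite subrr mul0r in h.
apply: cvg0_le hd => k; rewrite ger0_norm ?sqr_ge0 // ler_pdivlMr //.
have := ph_step k; lra.
Qed.

Lemma ecvg : (fun k => `|x k - xp k|) @ \oo --> 0.
Proof. by rewrite -cvg_shiftS; exact: dcvg. Qed.

Lemma dist_cvg : exists l : R, (fun k => `|x k - z| ^+ 2) @ \oo --> l.
Proof.
have [l hl] := ph_cvg; exists (l + 0 - 0).
have [M hM] := seq_bounded.
have hi : (fun k => 2 * lam * ip (x k - z) (B (x k) - B (xp k))) @ \oo --> 0.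
  apply: (@cvg0_le R nat _ _ _ (fun k => 2 * lam * (M * (L * `|x k - xp k|)))).
    move=> k; rewrite normrM ger0_norm; last by apply: mulr_ge0 => //; exact: ltW.
    apply: ler_wpM2l; first by apply: mulr_ge0 => //; exact: ltW.
    rewrite (le_trans (CS hip _ _)) //; apply: ler_pM => //.
  have h : (fun k => 2 * lam * (M * (L * `|x k - xp k|))) @ \oo --> 2 * lam * (M * (L * 0)).
    by apply: cvgMl_tmp; apply: cvgMl_tmp; apply: cvgMl_tmp; exact: ecvg.
  by rewrite !mulr0 in h.
have hn : (fun k => lam * L * `|x k - xp k| ^+ 2) @ \oo --> 0.
  have h : (fun k => lam * L * (`|x k - xp k| * `|x k - xp k|)) @ \oo --> lam * L * (0 * 0).
    by apply: cvgMl_tmp; apply: cvgM; exact: ecvg.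
  rewrite mulr0 mulr0 in h; apply: cvg_ext_to h _ => k /=; by rewrite expr2.
apply: cvg_ext_to (cvgB (cvgD hl hi) hn) _ => k /=; rewrite /ph /phi !fctE /=; ring.
Qed.

Lemma ucvg : (fun k => `|a k + B (x k.+1)|) @ \oo --> 0.
Proof.
have h k : `|a k + B (x k.+1)| <= lam^-1 * (`|x k - x k.+1| + lam * L * `|x k.+1 - x k| + lam * L * `|x k - xp k|).
  rewrite ler_pdivlMl // -[X in X * _](ger0_norm (ltW lam0)) -normrZ scalerDr.
  have ha : lam *: a k = x k - (2 * lam) *: B (x k) + lam *: B (xp k) - x k.+1.
    by rewrite heq addrAC subrr add0r.
  rewrite ha id1; apply: le_trans (ler_normD _ _) _.
  rewrite -[X in _ <= X]addrA lerD2l.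
  apply: le_trans (ler_normB _ _) _; rewrite !normrZ ger0_norm ?(ltW lam0) // -!mulrA.
  by apply: lerD; rewrite ler_pM2l //; apply: lipB.
have hd' : (fun k => `|x k - x k.+1|) @ \oo --> 0.
  by apply: cvg_ext_to dcvg _ => k; rewrite distrC.
have hg : (fun k => lam^-1 * (`|x k - x k.+1| + lam * L * `|x k.+1 - x k| + lam * L * `|x k - xp k|)) @ \oo --> lam^-1 * (0 + lam * L * 0 + lam * L * 0).
  apply: cvgMl_tmp; apply: cvgD; first apply: cvgD.
  - exact: hd'.
  - by apply: cvgMl_tmp; exact: dcvg.
  - by apply: cvgMl_tmp; exact: ecvg.
rewrite !mulr0 !addr0 mulr0 in hg.
by apply: cvg0_le hg => k; rewrite ger0_norm.
Qed.
End Seq.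
Section Riesz.
Variables (R : realType) (H : completeNormedModType R) (ip : H -> H -> R).
Hypothesis hip : is_inner_product ip.

Lemma sq_lt_norm (d e : R) : 0 <= d -> 0 < e -> d ^+ 2 < e ^+ 2 -> d < e.
Proof. move=> d0 e0 h; rewrite !expr2 in h; nra. Qed.

Lemma riesz (f : H -> R) (C : R) :
  (forall a u v, f (a *: u + v) = a * f u + f v) ->
  (forall u, `|f u| <= C * `|u|) ->
  exists z, forall v, f v = ip z v.
Proof.
move=> flin fb.
have f0 : f 0 = 0 by have := flin 1 0 0; rewrite scale1r addr0 mul1r; lra.
have fZ a u : f (a *: u) = a * f u by rewrite -[a *: u]addr0 flin f0 addr0.
have fD u v : f (u + v) = f u + f v by have := flin 1 u v; rewrite scale1r mul1r.
have fB u w : f (u - w) = f u - f w.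
  by rewrite addrC -scaleN1r flin mulN1r addrC.
pose Phi v := `|v| ^+ 2 - 2 * f v.
have Phi_lb v : - C ^+ 2 <= Phi v.
  have h1 := fb v; have h2 := ler_norm (f v); have h3 := sqr_ge0 (`|v| - C).
  rewrite /Phi; nra.
pose E := range Phi.
have hE : has_inf E.
  split; first by exists (Phi 0); exists 0.
  by exists (- C ^+ 2) => _ [v _ <-]; exact: Phi_lb.
pose m := inf E.
have hm v : m <= Phi v by apply: (ge_inf hE.2); exists v.
have hv : forall n : nat, exists v, Phi v < m + n.+1%:R^-1.
  move=> n; have hn : (0 : R) < n.+1%:R^-1 by rewrite invr_gt0 ltr0Sn.
  by have [_ [v _ <-] ?] := inf_adherent hn hE; exists v.
have [v hv'] := choice hv.
have par a b : `|a - b| ^+ 2 <= 2 * Phi a + 2 * Phi b - 4 * m.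
  have h := hm (2^-1 *: (a + b)).
  rewrite /Phi normrZ fZ fD ger0_norm ?invr_ge0 ?ler0n // exprMn in h.
  have pl : `|a + b| ^+ 2 + `|a - b| ^+ 2 = 2 * `|a| ^+ 2 + 2 * `|b| ^+ 2.
    by rewrite (normD2 hip) (normB2 hip); ring.
  rewrite /Phi; have h2 : (2^-1 : R) ^+ 2 = 4^-1.
    by rewrite expr2 -invfM -natrM.
  rewrite h2 in h; lra.
have hc : cvg (v @ \oo).
  apply/cauchy_cvgP; apply: cauchy_exP => eps eps0.
  have e8 : 0 < eps ^+ 2 / 8 by apply: divr_gt0; [exact: exprn_gt0|exact: ltr0Sn].
  have [N _ hN] := cvgr0_norm_le _ (@cvg_harmonic R) _ e8.
  exists (v N); exists N => // n /= hn.
  rewrite -ball_normE /ball_ /=.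
  apply: sq_lt_norm => //.
  have h1 := par (v N) (v n); have h2 := hv' N; have h3 := hv' n.
  have h4 := hN N (leqnn N); have h5 := hN n hn.
  rewrite /= ger0_norm ?invr_ge0 ?ler0n // in h4.
  rewrite /= ger0_norm ?invr_ge0 ?ler0n // in h5.
  have h6 : 0 < eps ^+ 2 by exact: exprn_gt0.
  apply: le_lt_trans h1 _.
  set a1 := N.+1%:R^-1 in h2 h4; set a2 := n.+1%:R^-1 in h3 h5.
  clearbody a1 a2.
  have h7 : 2 * Phi (v N) + 2 * Phi (v n) - 4 * m < 2 * a1 + 2 * a2 by lra.
  apply: lt_le_trans h7 _; lra.
pose z := lim (v @ \oo).
have hz : v @ \oo --> z := hc.
have hd : (fun n => `|v n - z|) @ \oo --> 0.
  have h : (fun n => `|v n - z|) @ \oo --> `|z - z|.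
    by apply: cvg_norm; apply: cvgB => //; exact: cvg_cst.
  by rewrite subrr normr0 in h.
have hf : (fun n => f (v n)) @ \oo --> f z.
  have h0 : (fun n => f (v n) - f z) @ \oo --> 0.
    apply: (@cvg0_le R nat _ _ _ (fun n => C * `|v n - z|)).
      by move=> n; rewrite -fB; exact: fb.
    have h : (fun n => C * `|v n - z|) @ \oo --> C * 0 by apply: cvgMl_tmp.
    by rewrite mulr0 in h.
  have h : (fun n => (f (v n) - f z) + f z) @ \oo --> 0 + f z.
    by apply: cvgD => //; exact: cvg_cst.
  by rewrite add0r in h; apply: cvg_ext_to h _ => n /=; rewrite subrK.
have hPz w : Phi z <= Phi w.
  apply: le_trans (hm w).
  have hn : (fun n => `|v n| * `|v n|) @ \oo --> `|z| * `|z|.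
    by apply: cvgM; apply: cvg_norm.
  have hP : (fun n => Phi (v n)) @ \oo --> Phi z.
    rewrite /Phi expr2; apply: cvgB; last by apply: cvgMl_tmp.
    by apply: cvg_ext_to hn _ => n /=; rewrite expr2.
  have hU : (fun n => m + harmonic n) @ \oo --> m + 0.
    by apply: cvgD; [exact: cvg_cst|exact: cvg_harmonic].
  rewrite addr0 in hU; apply: ler_cvg_to hP hU _.
  by near=> n; apply: ltW; exact: hv' n.
exists z => w.
pose g := ip z w - f w.
have key t : 0 <= 2 * t * g + t ^+ 2 * `|w| ^+ 2.
  have := hPz (z + t *: w); rewrite /Phi (normD2 hip) fD fZ normrZ exprMn (ipZr hip).
  rewrite real_normK ?num_real // /g; lra.
pose s := (`|w| ^+ 2 + 1)^-1.
have s0 : 0 < s by rewrite invr_gt0; have := sqr_ge0 `|w|; lra.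
have sw : s * `|w| ^+ 2 <= 1.
  rewrite /s ler_pdivrMl; last by have := sqr_ge0 `|w|; lra.
  lra.
have := key (- (s * g)).
have g2 := sqr_ge0 g.
move=> k.
have : s * g ^+ 2 <= 0.
  have e : 2 * - (s * g) * g + (- (s * g)) ^+ 2 * `|w| ^+ 2 = s * g ^+ 2 * (s * `|w| ^+ 2 - 2).
    ring.
  rewrite e in k.
  have : s * g ^+ 2 * (s * `|w| ^+ 2 - 2) <= s * g ^+ 2 * (- 1).
    apply: ler_wpM2l; last lra.
    by apply: mulr_ge0; [exact: ltW|exact: sqr_ge0].
  lra.
rewrite pmulr_rle0 // => hg.
have : g ^+ 2 = 0 by apply/eqP; rewrite eq_le hg sqr_ge0.
move/eqP; rewrite sqrf_eq0 /g subr_eq0 => /eqP ->.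
by [].
Unshelve. all: end_near.
Qed.
End Riesz.
Section Ultra.
Variables (R : realType).

Lemma ulim_ex (U : set_system nat) (UF : UltraFilter U) (s : nat -> R) (M : R) :
  (forall k, `|s k| <= M) -> exists l : R, s @ U --> l.
Proof.
move=> hM.
have K := @segment_compact R (- M) M.
have hin : U (s @^-1` [set` `[- M, M]]).
  apply: filterS filterT => k _ /=; rewrite in_itv /= -ler_norml; exact: hM.
have [p [_ cp]] := K (s @ U) _ hin.
exists p => N hN.
have [//|hC] := in_ultra_setVsetC (s @^-1` N) UF.
have hC' : (s @ U) (~` N) by rewrite /= /fmap /= preimage_setC.
have [q [nq Nq]] := cp _ _ hC' hN.
by exfalso.
Qed.

Variables (H : completeNormedModType R) (ip : H -> H -> R).
Hypothesis hip : is_inner_product ip.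

Lemma wlim_ex (U : set_system nat) (UF : UltraFilter U) (X : nat -> H) (M : R) :
  (forall k, `|X k| <= M) ->
  exists p, forall w, (fun k => ip (X k) w) @ U --> ip p w.
Proof.
move=> hM.
have M0 : 0 <= M by apply: le_trans (hM 0%N); exact: normr_ge0.
have hc w : exists l : R, (fun k => ip (X k) w) @ U --> l.
  apply: (@ulim_ex U UF _ (M * `|w|)) => k.
  by apply: le_trans (CS hip _ _) _; apply: ler_wpM2r.
pose f w := lim ((fun k => ip (X k) w) @ U).
have hf w : (fun k => ip (X k) w) @ U --> f w.
  by have [l hl] := hc w; rewrite /f (cvg_lim _ hl).
have [p hp] : exists p, forall v, f v = ip p v.
  apply: (@riesz R H ip hip f M).
    move=> a u v.
    have h : (fun k => a * ip (X k) u + ip (X k) v) @ U --> a * f u + f v.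
      by apply: cvgD; [apply: cvgMl_tmp|].
    rewrite {1}/f; apply: cvg_lim; first exact: Rhausdorff.
    have -> : (fun k => ip (X k) (a *: u + v)) = (fun k => a * ip (X k) u + ip (X k) v).
      by apply/funext => k; rewrite (ipDr hip) (ipZr hip).
    exact: h.
  move=> u.
  have h1 : (fun k => `|ip (X k) u|) @ U --> `|f u| by apply: cvg_norm.
  apply: ler_cvg_to h1 (cvg_cst (M * `|u|)) _.
  by apply: nearW => k; apply: le_trans (CS hip _ _) _; apply: ler_wpM2r.
by exists p => w; rewrite -hp.
Qed.
End Ultra.
Lemma cvg_oo_U (R : realType) (U : set_system nat) (UF : UltraFilter U)
  (hU : forall N, U [set k | (N <= k)%N]) (g : nat -> R) (l : R) :
  g @ \oo --> l -> g @ U --> l.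
Proof.
move=> h N hN; have [N0 _ hN0] := h N hN.
exact: (filterS hN0 (hU N0)).
Qed.

Section Cluster.
Variables (R : realType) (H : completeNormedModType R) (ip : H -> H -> R).
Variables (A : H -> set H) (B : H -> H) (L : R).
Hypothesis hip : is_inner_product ip.
Hypothesis maxA : maximally_monotone ip A.
Hypothesis monoB : monotone_fun ip B.
Hypothesis lipB : lipschitz_with L B.
Hypothesis L0 : 0 < L.

Variables (U : set_system nat) (UF : UltraFilter U).
Hypothesis hU : forall N, U [set k | (N <= k)%N].
Variables (X aa : nat -> H) (M : R) (p : H).
Hypothesis hA : forall k, A (X k) (aa k).
Hypothesis hM : forall k, `|X k| <= M.
Hypothesis hu : (fun k => `|aa k + B (X k)|) @ \oo --> 0.
Hypothesis hX : forall w, (fun k => ip (X k) w) @ U --> ip p w.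

Let Uk k := aa k + B (X k).

Lemma hU0 c : (fun k => ip (X k - c) (Uk k)) @ U --> 0.
Proof.
apply: cvg_oo_U => //.
apply: (@cvg0_le R nat _ _ _ (fun k => (M + `|c|) * `|Uk k|)).
  move=> k; apply: le_trans (CS hip _ _) _; apply: ler_wpM2r => //.
  by apply: le_trans (ler_normB _ _) _; rewrite lerD2r.
have h : (fun k => (M + `|c|) * `|Uk k|) @ \oo --> (M + `|c|) * 0.
  by apply: cvgMl_tmp; exact: hu.
by rewrite mulr0 in h.
Qed.

Lemma zer_cluster : zer_sum A B p.
Proof.
have [monoA maxA'] := maxA.
have hBb k : `|B (X k)| <= `|B 0| + L * M.
  have := lipB (X k) 0; rewrite subr0 => h.
  have h2 : `|B (X k)| <= `|B (X k) - B 0| + `|B 0|.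
    by have := ler_normD (B (X k) - B 0) (B 0); rewrite subrK.
  have h3 : L * `|X k| <= L * M by rewrite ler_pM2l.
  lra.
have [q hq] := wlim_ex hip UF hBb.
have hB c : (fun k => ip c (B (X k))) @ U --> ip c q.
  rewrite (ipC hip c q); have -> : (fun k => ip c (B (X k))) = (fun k => ip (B (X k)) c).
    by apply/funext => k; rewrite (ipC hip).
  exact: hq.
have hC (c : R) : (fun k : nat => c) @ U --> c by exact: cvg_cst.
have st1 y v : A y v -> 0 <= ip (p - y) (- q - v).
  move=> hyv.
  have hl : (fun k => ip (X k - y) (Uk k) - ip (X k) (B p) - ip p (B (X k)) + ip p (B p)
      + ip y (B (X k)) - ip (X k) v + ip y v) @ U -->
      0 - ip p (B p) - ip p q + ip p (B p) + ip y q - ip p v + ip y v.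
    repeat (apply: cvgD || apply: cvgN).
    all: try first [exact: hU0|exact: hX|exact: hB|exact: hC].
  have e : 0 - ip p (B p) - ip p q + ip p (B p) + ip y q - ip p v + ip y v
      = ip (p - y) (- q - v).
    rewrite !(ipBl hip, ipBr hip, ipNr hip); rewrite (ipC hip y q) (ipC hip p q); ring.
  rewrite -e; apply: ler_cvg_to (hC 0) hl _; apply: nearW => k.
  have m1 := monoA _ _ _ _ (hA k) hyv.
  have m2 := monoB (X k) p.
  rewrite /Uk; move: m1 m2.
  have -> : aa k = (aa k + B (X k)) - B (X k) by rewrite addrK.
  rewrite !(ipBl hip, ipBr hip, ipDr hip, ipNr hip).
  lra.
have hpq : A p (- q).
  pose A' := fun x => A x `|` [set u | x = p /\ u = - q].
  have monoA' : monotone_op ip A'.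
    move=> x1 x2 u1 u2 [h1|[e1 e2]] [h2|[e3 e4]].
    - exact: monoA.
    - rewrite e3 e4; have := st1 _ _ h1.
      by rewrite -[x1 - p]opprB -[u1 - - q]opprB (ipNl hip) (ipNr hip) opprK.
    - by rewrite e1 e2; exact: st1.
    - by rewrite e1 e2 e3 e4 subrr (ip0l hip).
  have incl x : A x `<=` A' x by move=> u hu0; left.
  by rewrite -(maxA' A' monoA' incl p); right.
have st2 w : 0 <= ip (p - w) (q - B w).
  have hl : (fun k => ip (X k - p) (Uk k) + ip p (B (X k)) + ip (X k) q - ip p q
      - ip (X k) (B w) - ip w (B (X k)) + ip w (B w)) @ U -->
      0 + ip p q + ip p q - ip p q - ip p (B w) - ip w q + ip w (B w).
    repeat (apply: cvgD || apply: cvgN).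
    all: try first [exact: hU0|exact: hX|exact: hB|exact: hC].
  have e : 0 + ip p q + ip p q - ip p q - ip p (B w) - ip w q + ip w (B w)
      = ip (p - w) (q - B w).
    rewrite !(ipBl hip, ipBr hip); ring.
  rewrite -e; apply: ler_cvg_to (hC 0) hl _; apply: nearW => k.
  have m1 := monoA _ _ _ _ (hA k) hpq.
  have m2 := monoB (X k) w.
  rewrite /Uk; move: m1 m2.
  have -> : aa k = (aa k + B (X k)) - B (X k) by rewrite addrK.
  rewrite !(ipBl hip, ipBr hip, ipDr hip, ipNr hip, opprK).
  lra.
have st3 : q = B p.
  pose h := B p - q.
  pose t := (2 * L)^-1.
  have t0 : 0 < t by rewrite invr_gt0 mulr_gt0.
  have tL : L * t = 2^-1.
    by rewrite /t invfM mulrCA mulfV ?mulr1 // gt_eqF.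
  have s2 := st2 (p - t *: h).
  have e0 : p - (p - t *: h) = t *: h by rewrite opprD opprK addrA subrr add0r.
  rewrite e0 (ipZl hip) pmulr_rge0 // in s2.
  have l1 : - (`|h| * (L * (t * `|h|))) <= ip h (B (p - t *: h) - B p).
    rewrite (le_trans _ (ip_ge hip _ _)) // lerN2; apply: ler_wpM2l => //.
    apply: le_trans (lipB _ _) _; rewrite ler_pM2l //.
    have e3 : p - t *: h - p = - (t *: h) by rewrite addrAC subrr add0r.
    rewrite e3 normrN normrZ.
    by rewrite ger0_norm // ltW.
  have e1 : ip h (q - B (p - t *: h)) = - ip h h - ip h (B (p - t *: h) - B p).
    rewrite /h !(ipBr hip); ring.
  rewrite e1 (ipxx hip) in s2.
  have e2 : `|h| * (L * (t * `|h|)) = 2^-1 * `|h| ^+ 2.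
    by rewrite -tL; ring.
  rewrite e2 in l1.
  have : `|h| ^+ 2 <= 0 by lra.
  rewrite -(ipxx hip) => hh.
  have : `|h| ^+ 2 == 0 by rewrite eq_le -(ipxx hip) hh (ipxx hip) sqr_ge0.
  by rewrite sqrf_eq0 normr_eq0 subr_eq0 => /eqP.
by exists (- q) => //; rewrite st3 addNr.
Qed.
End Cluster.
Lemma ultra_inf (S : set nat) : (forall N, exists2 k, (N <= k)%N & S k) ->
  exists U : set_system nat, [/\ UltraFilter U, (forall N, U [set k | (N <= k)%N]) & U S].
Proof.
move=> hS.
pose F := filter_from setT (fun N => [set k | (N <= k)%N /\ S k]).
have FF : ProperFilter F.
  apply: filter_from_proper; last by move=> N _; have [k hk1 hk2] := hS N; exists k.
  apply: filter_fromT_filter; first by exists 0%N.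
  move=> i j; exists (maxn i j) => k [hk sk].
  by split; split => //; apply: leq_trans hk; rewrite ?leq_maxl ?leq_maxr.
have [U [UU sFU]] := ultraFilterLemma FF.
exists U; split => //.
  by move=> N; apply: sFU; exists N => // k [].
by apply: sFU; exists 0%N => // k [].
Qed.

Unset Implicit Arguments.

Theorem corollary2p6 (R : realType) (H : completeNormedModType R)
  (ip : H -> H -> R) (A : H -> set H) (B : H -> H) (L lam : R)
  (xm1 : H) (x : nat -> H) :
  is_inner_product ip ->
  maximally_monotone ip A ->
  monotone_fun ip B ->
  0 < L -> lipschitz_with L B ->
  zer_sum A B !=set0 ->
  0 < lam -> lam < (2 * L)^-1 ->
  (forall k : nat,
     resolvent lam A
       (x k - (2 * lam) *: B (x k)
            + lam *: B (if k is k'.+1 then x k' else xm1))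
       (x k.+1)) ->
  exists2 z, zer_sum A B z & weak_cvg_to ip x z.
Proof.
move=> hip maxA monoB L0 lipB [z0 [az0 hz0 hz00]] lam0 lamLi hres.
have monoA := maxA.1.
have lamL : 2 * lam * L < 1.
  have h2L : 0 < 2 * L by rewrite mulr_gt0.
  have : lam * (2 * L) < 1 by rewrite -ltr_pdivlMr // mul1r.
  by have -> : 2 * lam * L = lam * (2 * L) by ring.
have hch : forall k, exists a0, A (x k.+1) a0 /\
    x k - (2 * lam) *: B (x k) + lam *: B (xp x xm1 k) = x k.+1 + lam *: a0.
  by move=> k; have [a0 h1 h2] := hres k; exists a0.
have [a ha] := choice hch.
have hA k := (ha k).1.
have heq k := (ha k).2.
pose X k := x k.+1.
have hzer z : zer_sum A B z -> exists l : R, (fun k => `|X k - z| ^+ 2) @ \oo --> l.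
  move=> [az hz hz1].
  have [l hl] := dist_cvg hip monoA monoB lipB lam0 L0 lamL hA heq hz hz1.
  by exists l; rewrite -cvg_shiftS in hl.
have [M0 hM0] := seq_bounded hip monoA monoB lipB lam0 L0 lamL hA heq hz0 hz00.
have hXM k : `|X k| <= M0 + `|z0|.
  have h1 := ler_normD (X k - z0) z0; rewrite subrK in h1.
  have h2 := hM0 k.+1.
  rewrite /X; lra.
have hu := ucvg hip monoA monoB lipB lam0 L0 lamL hA heq hz0 hz00.
have clus (U : set_system nat) (UF : UltraFilter U) (hU : forall N, U [set k | (N <= k)%N]) :
    exists2 p, zer_sum A B p & forall w, (fun k => ip (X k) w) @ U --> ip p w.
  have [p hp] := wlim_ex hip UF hXM.
  exists p => //.
  exact: (@zer_cluster R H ip A B L hip maxA monoB lipB L0 U UF hU X a _ p hA hXM hu hp).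
have key (U : set_system nat) (UF : UltraFilter U) (hU : forall N, U [set k | (N <= k)%N])
    p (hp : forall w, (fun k => ip (X k) w) @ U --> ip p w) z1 z2 l1 l2 :
    (fun k => `|X k - z1| ^+ 2) @ \oo --> l1 -> (fun k => `|X k - z2| ^+ 2) @ \oo --> l2 ->
    l1 - l2 = 2 * ip p (z2 - z1) + (`|z1| ^+ 2 - `|z2| ^+ 2).
  move=> hl1 hl2.
  have h1 : (fun k => `|X k - z1| ^+ 2 - `|X k - z2| ^+ 2) @ U --> l1 - l2.
    by apply: cvg_oo_U => //; apply: cvgB.
  have h2 : (fun k => 2 * ip (X k) (z2 - z1) + (`|z1| ^+ 2 - `|z2| ^+ 2)) @ U -->
      2 * ip p (z2 - z1) + (`|z1| ^+ 2 - `|z2| ^+ 2).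
    by apply: cvgD; [apply: cvgMl_tmp; exact: hp|exact: cvg_cst].
  have e : (fun k => `|X k - z1| ^+ 2 - `|X k - z2| ^+ 2) =
      (fun k => 2 * ip (X k) (z2 - z1) + (`|z1| ^+ 2 - `|z2| ^+ 2)).
    apply/funext => k; rewrite !(normB2 hip) (ipBr hip); ring.
  rewrite e in h1.
  by rewrite -(cvg_lim (@Rhausdorff R) h1) (cvg_lim (@Rhausdorff R) h2).
have [U0 [U0U sU0]] := ultraFilterLemma (@eventually_filter).
have hU0 N : U0 [set k | (N <= k)%N] by apply: sU0; exists N.
have [p hpz hp] := clus U0 U0U hU0.
exists p => // y.
rewrite -cvg_shiftS.
apply: contrapT => hnot.
have [e e0 hS] : exists2 e : R, 0 < e &
    forall N, exists2 k, (N <= k)%N & e < `|ip p y - ip (X k) y|.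
  apply: contrapT => hall; apply: hnot; apply/cvgrPdist_le => e e0.
  apply: contrapT => hne; apply: hall; exists e => // N.
  apply: contrapT => hk; apply: hne; exists N => // k /= hk'.
  apply: contrapT => hgt; apply: hk; exists k => //.
  by rewrite ltNge; apply/negP.
have [U1 [U1U hU1 hS1]] := ultra_inf hS.
have [p1 hp1z hp1] := clus U1 U1U hU1.
have ge : e <= `|ip p y - ip p1 y|.
  have h : (fun k => `|ip p y - ip (X k) y|) @ U1 --> `|ip p y - ip p1 y|.
    by apply: cvg_norm; apply: cvgB; [exact: cvg_cst|exact: hp1].
  apply: ler_cvg_to (cvg_cst e) h _.
  by apply: filterS hS1 => k /ltW.
have [l1 hl1] := hzer p hpz.
have [l2 hl2] := hzer p1 hp1z.
have k0 := key U0 U0U hU0 p hp p p1 l1 l2 hl1 hl2.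
have k1 := key U1 U1U hU1 p1 hp1 p p1 l1 l2 hl1 hl2.
have hpp : ip (p1 - p) (p1 - p) = 0.
  rewrite (ipBl hip); lra.
rewrite (ipxx hip) in hpp.
have : p1 - p = 0 by apply/eqP; rewrite -normr_eq0 -sqrf_eq0 hpp.
move/eqP; rewrite subr_eq0 => /eqP e1.
by rewrite e1 subrr normr0 in ge; lra.
Qed.
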